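(* Let $F$ be a finite field and $G$ a finite abelian group. Let $0<r<1$, for each $n$ put $k=[rn]$ (the integer nearest to $rn$), and let $A$ be chosen uniformly at random from $(FG)^{k\times n}$. Then $\lim_{n\to\infty}\Pr(A \text{ is full-rank})=1$, equivalently $\lim_{n\to\infty}\Pr(A\text{ is not full-rank})=0$, and both limits converge exponentially.
   Context: $FG$ is the group algebra of $G$ over $F$. A matrix $A\in(FG)^{k\times n}$ is full-rank if its $FG$-rank equals $k$; equivalently, the $F$-dimension of $\{\mathbf{b}A\mid\mathbf{b}\in(FG)^k\}\subseteq(FG)^n$ equals $k|G|$. *)

(* Defs.v *)
From HB Require Import structures.
From mathcomp Require Import all_boot all_order all_algebra all_fingroup.
From mathcomp Require Import reals.
Set Implicit Arguments. Unset Strict Implicit. Unset Printing Implicit Defensive.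
Import Order.TTheory GRing.Theory Num.Theory.
Local Open Scope ring_scope.

(* The group algebra FG is modelled by its underlying F-vector space
   {ffun gT -> F}; the product is convolution (a*b)(h) = \sum_g a g * b (g^-1 h). *)

(* For A in (FG)^{k x n}, the F-linear map b |-> bA from (FG)^k to (FG)^n,
   written as an F-matrix w.r.t. the standard F-bases {delta_g e_i}:
   the basis vector indexed by (i,g) (= g placed in coordinate i) is sent to
   the vector whose j-th coordinate is g * A i j, whose coefficient at h is
   A i j (g^-1 * h). *)
Definition regmx (F : finFieldType) (gT : finGroupType) (k n : nat)
  (A : 'M[{ffun gT -> F}]_(k, n)) :
  'M[F]_(#|{: 'I_k * gT}|, #|{: 'I_n * gT}|) :=
  \matrix_(p, q)
     let: (i, g) := enum_val p in
     let: (j, h) := enum_val q in A i j (g^-1 * h)%g.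

(* A is full-rank iff the F-dimension of {bA | b in (FG)^k} equals k|G|;
   that F-dimension is the rank of the matrix of the F-linear map b |-> bA. *)
Definition fullrank (F : finFieldType) (gT : finGroupType) (k n : nat)
  (A : 'M[{ffun gT -> F}]_(k, n)) : bool :=
  \rank (regmx A) == (k * #|gT|)%N.

Definition prob_not_fullrank (R : realType) (F : finFieldType) (gT : finGroupType)
  (k n : nat) : R :=
  (#|[set A : 'M[{ffun gT -> F}]_(k, n) | ~~ fullrank A]|)%:R
  / (#|{: 'M[{ffun gT -> F}]_(k, n)}|)%:R.

(* k = [r n], the integer nearest to r n (ties rounded up). *)
Definition nearest_k (R : realType) (r : R) (n : nat) : nat :=
  Num.truncn (r * n%:R + 2^-1).

(* Main.v *)
Require Import Defs.
From HB Require Import structures.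
From mathcomp Require Import all_boot all_order all_algebra all_fingroup.
From mathcomp Require Import reals zify ring lra.
Import Order.TTheory GRing.Theory Num.Theory.
Local Open Scope ring_scope.
Lemma card_submx (F : finFieldType) k N m (W : 'M[F]_(m, N)) :
  #|[set B : 'M[F]_(k, N) | (B <= W)%MS]| = (#|F| ^ (k * \rank W))%N.
Proof.
have inj : injective (fun X : 'M[F]_(k, \rank W) => X *m row_base W).
  exact: row_free_inj (row_base_free W).
rewrite -card_mx -cardsT -(card_imset _ inj); apply: eq_card => B.
rewrite inE; apply/idP/imsetP.
  move=> BW; have : (B <= row_base W)%MS by rewrite eq_row_base.
  by move=> /submxP[D ->]; exists D.
by move=> [D _ ->]; have := submxMl D (row_base W); rewrite eq_row_base.
Qed.

Lemma card_ker (F : finFieldType) K N (T : 'M[F]_(K, N)) :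
  #|[set x : 'rV[F]_K | x *m T == 0]| = (#|F| ^ (K - \rank T))%N.
Proof.
rewrite -mxrank_ker -(mul1n (\rank _)) -card_submx; apply: eq_card => x.
by rewrite !inE sub_kermx.
Qed.

Lemma sum_rank_bound (R : numFieldType) (F : finFieldType) k N :
  \sum_(B : 'M[F]_(k,N)) ((#|F|%:R : R) ^+ (k * \rank B))^-1
    <= (#|F|%:R) ^+ (N * N).
Proof.
have Q0 : (#|F|%:R : R) != 0 by rewrite pnatr_eq0 -lt0n; apply/card_gt0P; exists 0.
rewrite (partition_big (fun B => <<B>>%MS : 'M[F]_N) xpredT) //=.
have -> : (#|F|%:R : R) ^+ (N * N) = \sum_(W : 'M[F]_N) 1.
  rewrite sumr_const; set c := #|_|; by rewrite /c card_mx -natrX.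


apply: ler_sum => W _.
apply: (@le_trans _ _ (\sum_(B in [set B : 'M[F]_(k, N) | (B <= W)%MS])
    ((#|F|%:R : R) ^+ (k * \rank W))^-1)).
  rewrite [X in _ <= X]big_mkcond [X in X <= _]big_mkcond /=; apply: ler_sum => B _.
  case: (<<B>>%MS =P W) => [<-|_]; last by case: ifP => // _; rewrite invr_ge0 exprn_ge0 ?ler0n.
  by rewrite inE genmxE submx_refl genmxE.

rewrite sumr_const card_submx -[_ *+ (_ ^ _)%N]mulr_natr natrX mulVf // expf_neq0 //.
Qed.

Section Core.
Variables (F : finFieldType) (gT : finGroupType) (k n : nat).
Local Notation K := #|{: 'I_k * gT}|.
Local Notation N := #|gT|.

Definition bvec (B : 'M[F]_(k, N)) : 'rV[F]_K :=
  \row_p B (enum_val p).1 (enum_rank (enum_val p).2).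
Definition Tmx (B : 'M[F]_(k, N)) : 'M[F]_(K, N) :=
  \matrix_(p, h) B (enum_val p).1 (enum_rank (enum_val h * (enum_val p).2^-1)%g).
Definition colv (A : 'M[{ffun gT -> F}]_(k, n)) (j : 'I_n) : 'rV[F]_K :=
  \row_p A (enum_val p).1 j (enum_val p).2.

Lemma sum_pairs (f : 'I_k * gT -> F) : \sum_(p < K) f (enum_val p) = \sum_i \sum_g f (i, g).
Proof. rewrite -(big_enum_val f) pair_big; apply: eq_big => [x|[i g] _] //; rewrite inE. Qed.

Lemma entry_eq A B j (h : 'I_N) :
  (colv A j *m Tmx B) 0 h = (bvec B *m regmx A) 0 (enum_rank (j, enum_val h)).
Proof.
rewrite !mxE.
under eq_bigr do rewrite !mxE.
under [RHS]eq_bigr do rewrite !mxE enum_rankK.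
rewrite (sum_pairs (fun x => A x.1 j x.2 * B x.1 (enum_rank (enum_val h * x.2^-1)%g))).
rewrite (sum_pairs (fun x => B x.1 (enum_rank x.2) * (let: (i0, g) := x in A i0 j (g^-1 * enum_val h)%g))) /=.
apply: eq_bigr => i _.
have hinj : injective (fun g => enum_val h * g^-1)%g.
  by apply: (@can_inj _ _ _ (fun g => g^-1 * enum_val h)%g) => g; rewrite invMg invgK -mulgA mulVg mulg1.
rewrite [RHS](reindex_inj hinj) /=; apply: eq_bigr => g _.
by rewrite mulrC invMg invgK -mulgA mulVg mulg1.
Qed.

Lemma ker_col A B : bvec B *m regmx A = 0 -> forall j, colv A j *m Tmx B = 0.
Proof. by move=> H j; apply/rowP => h; rewrite entry_eq H !mxE. Qed.

Lemma rank_T B : (\rank B <= \rank (Tmx B))%N.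
Proof.
have E : B = rowsub (fun i => enum_rank (i, 1%g)) (Tmx B).
  by apply/matrixP => i h; rewrite !mxE enum_rankK /= invg1 mulg1 enum_valK.
rewrite {1}E; exact: mxrankS (rowsub_sub _ _).
Qed.

Lemma card_SB B : (#|[set A : 'M[{ffun gT -> F}]_(k,n) | bvec B *m regmx A == 0%R]|
   <= (#|F| ^ (K - \rank B)) ^ n)%N.
Proof.
set S := [set A | _].
pose phi (A : 'M[{ffun gT -> F}]_(k,n)) : {ffun 'I_n -> 'rV[F]_K} := [ffun j => colv A j].
have phi_inj : injective phi.
  move=> A1 A2 E; apply/matrixP => i j; apply/ffunP => g.
  have := congr1 (fun f : {ffun 'I_n -> 'rV[F]_K} => f j 0 (enum_rank (i, g))) E.
  by rewrite /= !ffunE !mxE enum_rankK.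
rewrite -(card_imset S phi_inj).
apply: (@leq_trans #|ffun_on [set x : 'rV[F]_K | x *m Tmx B == 0]|).
  apply: subset_leq_card; apply/subsetP => f /imsetP[A]; rewrite inE => /eqP HA ->.
  by apply/ffun_onP => j; rewrite ffunE inE (ker_col _ _ HA).
rewrite card_ffun_on card_ker card_ord -!expnM.
have F0 : (0 < #|F|)%N by apply/card_gt0P; exists 0.
by apply: leq_pexp2l => //; rewrite leq_mul2r leq_sub2l ?orbT // rank_T.
Qed.

Lemma nfr_sub : [set A : 'M[{ffun gT -> F}]_(k,n) | ~~ fullrank A] \subset
   \bigcup_(B | B != 0) [set A | bvec B *m regmx A == 0].
Proof.
apply/subsetP => A HA.
have Hr : \rank (regmx A) != (k * #|gT|)%N by move: HA; rewrite inE.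
clear HA.
have : ~~ row_free (regmx A) by rewrite /row_free; apply: contra Hr => /eqP ->; rewrite card_prod card_ord.
rewrite -kermx_eq0 => /rowV0Pn [v /sub_kermxP vM v0].
pose B := \matrix_(i, h) v 0 (enum_rank (i, enum_val h)) : 'M[F]_(k, N).
have bB : bvec B = v.
  by apply/matrixP => i p; rewrite [i]ord1 !mxE enum_rankK -surjective_pairing enum_valK.
apply/bigcupP; exists B; last by rewrite inE bB vM.
apply: contraNneq v0 => B0; rewrite -bB B0; by apply/eqP/matrixP => i p; rewrite !mxE.
Qed.
End Core.

Lemma card_bigcup_le (I T : finType) (P : pred I) (S : I -> {set T}) :
  (#|\bigcup_(i | P i) S i| <= \sum_(i | P i) #|S i|)%N.
Proof.
elim/big_rec2: _ => [|i U m _ IH]; first by rewrite cards0.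
exact: leq_trans (leq_card_setU _ _).1 (leq_add (leqnn _) IH).
Qed.


Lemma ratio_le (R : numFieldType) (a b d : nat) : (0 < b)%N -> (0 < d)%N -> (a * d <= b)%N ->
  (a%:R : R) / b%:R <= (d%:R)^-1.
Proof.
move=> b0 d0 h; rewrite ler_pdivrMr ?ltr0n // ler_pdivlMl ?ltr0n //.
by rewrite -natrM ler_nat mulnC.
Qed.

Lemma main_bound (R : realType) (F : finFieldType) (gT : finGroupType) k n : (k <= n)%N ->
  prob_not_fullrank R F gT k n <=
    (#|F|%:R : R) ^+ (#|gT| * #|gT|) * ((#|F|%:R : R) ^+ (n - k))^-1.
Proof.
move=> kn.
have F0 : (0 < #|F|)%N by apply/card_gt0P; exists 0.
have G0 : (0 < #|gT|)%N by apply/card_gt0P; exists 1%g.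
set Q := (#|F|%:R : R).
have Q0 : 0 < Q by rewrite ltr0n.
rewrite /prob_not_fullrank.
have Etot : #|{: 'M[{ffun gT -> F}]_(k, n)}| = (#|F| ^ (#|gT| * (k * n)))%N.
  by rewrite card_mx card_ffun -expnM.
rewrite Etot.
have step1 : (#|[set A : 'M[{ffun gT -> F}]_(k, n) | ~~ fullrank A]| <=
   \sum_(B : 'M[F]_(k, #|gT|) | B != 0%R) (#|F| ^ (#|{: 'I_k * gT}| - \rank B)) ^ n)%N.
  apply: (leq_trans (subset_leq_card (nfr_sub F gT k n))).
  apply: leq_trans; first exact: card_bigcup_le.
  by apply: leq_sum => B _; exact: card_SB.
set c := (Q ^+ (n - k))^-1.
have c0 : 0 <= c by rewrite invr_ge0 exprn_ge0 // ltW.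
apply: (@le_trans _ _ ((\sum_(B : 'M[F]_(k, #|gT|) | B != 0)
    ((#|F| ^ (#|{: 'I_k * gT}| - \rank B)) ^ n)%N%:R) / (#|F| ^ (#|gT| * (k * n)))%N%:R)).
  by apply: ler_wpM2r; [rewrite invr_ge0 ler0n | rewrite -natr_sum ler_nat].
rewrite mulr_suml.
apply: (@le_trans _ _ (\sum_(B : 'M[F]_(k, #|gT|) | B != 0) (Q ^+ (k * \rank B))^-1 * c)).
  apply: ler_sum => B B0.
  rewrite /c -invfM /Q -!natrX -natrM; apply: ratio_le.
  - by rewrite expn_gt0 F0.
  - by rewrite muln_gt0 !expn_gt0 F0.
  rewrite -!expnM -!expnD; apply: leq_pexp2l => //.
  rewrite card_prod card_ord.
  have r1 : (0 < \rank B)%N by rewrite lt0n mxrank_eq0.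
  have r2 : (\rank B <= k)%N by apply: rank_leq_row.
  move: (\rank B) r1 r2 => r r1 r2.
  have kN : (r <= k * #|gT|)%N by apply: leq_trans r2 _; rewrite leq_pmulr.
  have h1 : (n - k <= r * (n - k))%N by rewrite leq_pmull.
  have h2 : (r * n = r * (n - k) + k * r)%N by rewrite [(k * r)%N]mulnC -mulnDr subnK.
  have h3 : ((k * #|gT| - r) * n + r * n = #|gT| * (k * n))%N.
    by rewrite -mulnDl subnK // mulnA [(k * _)%N]mulnC.
  move: h1 h2 h3; move: ((k * #|gT| - r) * n)%N (r * (n - k))%N (r * n)%N (k * r)%N (#|gT| * (k * n))%N.
  move=> a1 b1 c1 d1 e1; lia.
rewrite -mulr_suml; apply: ler_wpM2r => //.
apply: le_trans (sum_rank_bound R F k #|gT|).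
rewrite [X in X <= _]big_mkcond /=; apply: ler_sum => B _.
by case: ifP => // _; rewrite invr_ge0 exprn_ge0 // ltW.
Qed.
Lemma bernoulli (R : realFieldType) (x : R) L : 0 <= x <= 1 ->
  1 - L%:R * x <= (1 - x) ^+ L.
Proof.
move=> /andP[x0 x1]; elim: L => [|L IH]; first by rewrite mul0r subr0 expr0.
rewrite exprSr.
have h : (1 - L%:R * x) * (1 - x) <= (1 - x) ^+ L * (1 - x).
  by apply: ler_wpM2r => //; rewrite subr_ge0.
apply: le_trans h; rewrite -natr1.
have := mulr_ge0 (mulr_ge0 (ler0n R L) x0) x0.
have -> : (1 - L%:R * x) * (1 - x) = 1 - (L%:R + 1) * x + L%:R * x * x by ring.
by move=> h; rewrite lerDl.
Qed.

Lemma asym {R : realType} (r : R) : 0 < r < 1 ->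
  exists L : nat, (0 < L)%N /\ forall n, (nearest_k r n <= n)%N /\ (n %/ L <= n - nearest_k r n)%N.
Proof.
move=> /andP[r0 r1].
pose L := (Num.truncn (2 / (1 - r))).+1.
have hL : 2 < L%:R * (1 - r).
  have := truncnS_gt (2 / (1 - r)); rewrite ltr_pdivrMr ?subr_gt0 //.
exists L; split => // n.
set k := nearest_k r n.
have x0 : 0 <= r * n%:R + 2^-1 by have := mulr_ge0 (ltW r0) (ler0n R n); lra.
have kle : k%:R <= r * n%:R + 2^-1 by rewrite truncn_le.
have rn : r * n%:R <= n%:R by rewrite ler_piMl // ltW.
have kn : (k <= n)%N.
  rewrite /k /nearest_k truncn_le_nat.
  have -> : n.+1%:R = n%:R + 1 :> R by rewrite -natr1.
  lra.
split => //.
set m := (n %/ L)%N.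
have mL : (m * L <= n)%N by rewrite leq_divM.
have mLR : m%:R * L%:R <= n%:R :> R by rewrite -natrM ler_nat.
have f1 : (1 - r) * (m%:R * L%:R) <= (1 - r) * n%:R by apply: ler_wpM2l; [lra|].
have f2 : 2 * m%:R <= (L%:R * (1 - r)) * m%:R :> R by apply: ler_wpM2r; [rewrite ler0n | lra].
have m0 : 0 <= m%:R :> R by rewrite ler0n.
have : m%:R < (n - k)%:R + 1 :> R.
  rewrite natrB //.
  have e : (1 - r) * (m%:R * L%:R) = (L%:R * (1 - r)) * m%:R by ring.
  lra.
by rewrite natr1 ltr_nat ltnS.
Qed.

Theorem lemma6p3 (R : realType) (F : finFieldType) (gT : finGroupType) (r : R) :
  abelian [set: gT] -> 0 < r < 1 ->
  exists C q : R, 0 < q < 1 /\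
    forall n : nat,
      prob_not_fullrank R F gT (nearest_k r n) n <= C * q ^+ n.
Proof.
move=> _ rr; have [L [L0 HL]] := asym r rr.
set Q := (#|F|%:R : R).
have F2 : (1 < #|F|)%N by apply/card_gt1P; exists 0, 1; split => //; rewrite eq_sym oner_eq0.
have Q2 : 2 <= Q by rewrite /Q ler_nat.
have L1 : 1 <= L%:R :> R by rewrite ler1n.
set x := (2 * L%:R : R)^-1.
have x0 : 0 < x by rewrite invr_gt0 mulr_gt0 // ltr0n.
have x1 : x <= 2^-1.
  rewrite /x lef_pV2 ?posrE ?mulr_gt0 ?ltr0n //; lra.
exists (Q ^+ (#|gT| * #|gT|) * 2), (1 - x); split; first by apply/andP; split; lra.
move=> n; have [kn mk] := HL n.
apply: le_trans (main_bound R F gT _ _ kn) _.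
rewrite -mulrA; apply: ler_wpM2l; first by rewrite exprn_ge0 // ltW // (lt_le_trans _ Q2).
set k := nearest_k r n; set m := (n %/ L)%N.
have h1 : (Q ^+ (n - k))^-1 <= (2 ^+ m)^-1.
  rewrite lef_pV2 ?posrE ?exprn_gt0 ?(lt_le_trans _ Q2) //.
  apply: le_trans (_ : 2 ^+ (n - k) <= _).
    by rewrite ler_eXn2l // ltr1n.
  by apply: lerXn2r; rewrite ?nnegrE //.
apply: le_trans h1 _.
have hq : 2^-1 <= (1 - x) ^+ L.
  have hx : 0 <= x <= 1 by apply/andP; split; lra.
  apply: le_trans (@bernoulli R x L hx).
  have e : L%:R * x = 2^-1.
    by rewrite /x invfM mulrCA mulfV ?mulr1 // pnatr_eq0 -lt0n.
  lra.
have hn : (1 - x) ^+ (m.+1 * L) <= (1 - x) ^+ n.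
  apply: ler_wiXn2l; [lra | lra | exact: ltnW (ltn_ceil _ _)].
apply: le_trans (_ : 2 * (1 - x) ^+ (m.+1 * L) <= _); last first.
  by apply: ler_wpM2l.
rewrite mulnC exprM.
apply: le_trans (_ : 2 * (2^-1) ^+ m.+1 <= _); last first.
  apply: ler_wpM2l => //; apply: lerXn2r => //; rewrite nnegrE //; lra.
rewrite exprS mulrA mulfV; last by rewrite pnatr_eq0.
by rewrite mul1r exprVn.
Qed.
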